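(* Let $n\ge3$, $N=\binom n2$, fix distinct $s,t\in[n]$, and let $S=\{\{u,v\}:u\in\{s,t\},v\in[n]\setminus\{s,t\}\}$. For $w\in\mathbb{R}^N$ let $F(w)=\arg\min_{y\in\{-1,1\}^n,\ y_s=1,\ y_t=-1}\sum_{\{i,j\}}w_{\{i,j\}}(1-y_iy_j)$. Let $w\in\mathbb{R}^N$ be such that this minimizer is unique, call it $f(w)$, and let $w'$ differ from $w$ only on one pair $\{u,v\}$, by $z\in[-1,1]$. Then there exists $a\in\mathbb{R}^N$ supported on $S$, with $\|a\|_1\le2$, which depends only on $f(w)$, the pair $\{u,v\}$ and $z$, such that $F(w'+a)$ has the unique minimizer $f(w)$. In other words, $S$ is a dominating set of sensitivity $2$ for the (unique) minimum $s$-$t$ cut function $f$.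
   Context: A vector $y\in\{-1,1\}^n$ with $y_s=1,y_t=-1$ encodes an $s$-$t$ cut (the two sides being $\{i:y_i=1\}$ and $\{i:y_i=-1\}$); $\sum w_{\{i,j\}}(1-y_iy_j)$ is twice the weight of the cut for weight vector $w$ indexed by unordered pairs of $[n]$. *)

(* Defs.v *)
From HB Require Import structures.
From mathcomp Require Import all_boot all_order all_algebra.
Set Implicit Arguments. Unset Strict Implicit. Unset Printing Implicit Defensive.
Import Order.TTheory GRing.Theory Num.Theory.
Local Open Scope ring_scope.

(* Weight vectors in R^N, N = 'C(n,2), are indexed by
   unordered pairs {i,j}, represented as 2-element sets [set i; j]; values on
   other subsets of 'I_n are irrelevant to the objective. *)
Definition weights (R : realFieldType) (n : nat) := {set 'I_n} -> R.

Definition is_st_cut (R : realFieldType) (n : nat) (s t : 'I_n)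
  (y : {ffun 'I_n -> R}) : Prop :=
  (forall i, y i = 1 \/ y i = -1) /\ y s = 1 /\ y t = -1.

Definition cut_obj (R : realFieldType) (n : nat) (w : weights R n)
  (y : {ffun 'I_n -> R}) : R :=
  \sum_(i < n) \sum_(j < n | (i < j)%N) w [set i; j] * (1 - y i * y j).

Definition unique_min_cut (R : realFieldType) (n : nat) (s t : 'I_n)
  (w : weights R n) (y : {ffun 'I_n -> R}) : Prop :=
  is_st_cut s t y /\
  forall y', is_st_cut s t y' -> y' <> y -> cut_obj w y < cut_obj w y'.

Definition S_pairs (n : nat) (s t : 'I_n) (e : {set 'I_n}) : Prop :=
  exists u v, (u == s \/ u == t) /\ v != s /\ v != t /\ e = [set u; v].

Definition supported_on (R : realFieldType) (n : nat) (a : weights R n)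
  (P : {set 'I_n} -> Prop) : Prop := forall e, ~ P e -> a e = 0.

Definition norm1 (R : realFieldType) (n : nat) (a : weights R n) : R :=
  \sum_(e : {set 'I_n}) `|a e|.

Definition perturb (R : realFieldType) (n : nat) (w : weights R n)
  (e0 : {set 'I_n}) (z : R) : weights R n :=
  fun e => if e == e0 then w e + z else w e.

Definition addw (R : realFieldType) (n : nat) (w a : weights R n) : weights R n :=
  fun e => w e + a e.

(* Main.v *)
Require Import Defs.
From HB Require Import structures.
From mathcomp Require Import all_boot all_order all_algebra.
From mathcomp Require Import ring lra.
Import Order.TTheory GRing.Theory Num.Theory.
Local Open Scope ring_scope.

Section Aux.
Variable R : realFieldType.
Variable n : nat.

Definition single (E : {set 'I_n}) (c : R) : weights R n :=
  fun e => if e == E then c else 0.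

Lemma cut_obj_ext (w1 w2 : weights R n) y :
  (forall e, w1 e = w2 e) -> cut_obj w1 y = cut_obj w2 y.
Proof. by move=> H; rewrite /cut_obj; apply eq_bigr=> i _; apply eq_bigr=> j _; rewrite H. Qed.

Lemma cut_obj_add (w1 w2 : weights R n) y :
  cut_obj (fun e => w1 e + w2 e) y = cut_obj w1 y + cut_obj w2 y.
Proof.
rewrite /cut_obj -big_split /=; apply eq_bigr => i _; rewrite -big_split.
by apply eq_bigr => j _; rewrite mulrDl.
Qed.

Lemma set2_eq_lt (i j p q : 'I_n) : (i < j)%N -> (p < q)%N ->
  ([set i; j] == [set p; q]) = (i == p) && (j == q).
Proof.
move=> ij pq; apply/eqP/andP => [H|[/eqP-> /eqP->]] //.
have hi : i \in [set p; q] by rewrite -H set21.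
have hj : j \in [set p; q] by rewrite -H set22.
move: hi hj; rewrite !inE => /orP[] /eqP hi /orP[] /eqP hj; subst.
- by move: ij; rewrite ltnn.
- by [].
- by move: (ltn_trans ij pq); rewrite ltnn.
- by move: ij; rewrite ltnn.
Qed.

Lemma cut_single (p q : 'I_n) c y : p != q ->
  cut_obj (single [set p; q] c) y = c * (1 - y p * y q).
Proof.
wlog lt : p q / (p < q)%N.
  move=> W pq; case: (ltngtP p q) => h; first exact: W.
  - by rewrite setUC (W q p) 1?eq_sym // (mulrC (y q)).
  - by move: pq; rewrite (val_inj h) eqxx.
move=> pq; rewrite /cut_obj (bigD1 p) //= [X in _ + X]big1 ?addr0.
  rewrite (bigD1 q) //= [X in _ + X]big1 ?addr0.
    by rewrite /single set2_eq_lt // !eqxx.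
  move=> j /andP[pj jq]; by rewrite /single set2_eq_lt // eqxx (negbTE jq) mul0r.
move=> i ip; apply big1 => j ij.
by rewrite /single set2_eq_lt // (negbTE ip) mul0r.
Qed.

Lemma cut_single0 E y : cut_obj (single E 0) y = 0.
Proof.
rewrite /cut_obj big1 // => i _; rewrite big1 // => j _.
by rewrite /single; case: ifP; rewrite mul0r.
Qed.

Lemma sum_single E c : \sum_(e : {set 'I_n}) `|single E c e| = `|c|.
Proof.
rewrite (bigD1 E) //= big1 ?addr0; first by rewrite /single eqxx.
by move=> e eE; rewrite /single (negbTE eE) normr0.
Qed.

Definition cc0 (p z : R) : R :=
  if 0 <= z then (if p == -1 then z else 0) else (if p == 1 then -z else 0).

Lemma cc0_le1 p z : -1 <= z <= 1 -> `|cc0 p z| <= 1.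
Proof.
move=> /andP[z1 z2]; rewrite /cc0; case: (lerP 0 z) => hz;
  case: ifP => _; rewrite ?normr0 ?normrN ?ler01 //; rewrite ler_norml; lra.
Qed.

Lemma one_neq : ((1 : R) == -1) = false.
Proof. apply: gt_eqF; lra. Qed.
Lemma mone_neq : ((-1 : R) == 1) = false.
Proof. apply: lt_eqF; lra. Qed.

Lemma key (a b a' b' z : R) :
  (a = 1 \/ a = -1) -> (b = 1 \/ b = -1) ->
  (a' = 1 \/ a' = -1) -> (b' = 1 \/ b' = -1) ->
  z * (1 - a * b) <= z * (1 - a' * b') + cc0 (a * b) z * (1 - a * a')
                      + cc0 (a * b) z * (1 - b * b').
Proof.
move=> [->|->] [->|->] [->|->] [->|->]; rewrite /cc0 ?(mulr1, mul1r, mulrN, mulNr, opprK, one_neq, mone_neq, eqxx);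
  case: (lerP 0 z) => hz; lra.
Qed.

End Aux.
Arguments single {R n}.
Arguments cc0 {R}.

Definition px {R : realFieldType} {n : nat} (s t : 'I_n) (y : {ffun 'I_n -> R}) x :=
  if y x == 1 then s else t.

Definition Aw (R : realFieldType) (n : nat) (s t : 'I_n) (y : {ffun 'I_n -> R})
  (e : {set 'I_n}) (z : R) : weights R n :=
  fun e' => \sum_(x in e) single [set px s t y x; x]
              (if (x != s) && (x != t) then cc0 (\prod_(x in e) y x) z else 0) e'.

Arguments Aw {R n}.

Theorem lemma5p2 (R : realFieldType) (n : nat) (s t : 'I_n) :
  (3 <= n)%N -> s != t ->
  exists A : {ffun 'I_n -> R} -> {set 'I_n} -> R -> weights R n,
    forall (w : weights R n) (y : {ffun 'I_n -> R}) (u v : 'I_n) (z : R),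
      unique_min_cut s t w y -> u != v -> -1 <= z <= 1 ->
      let a := A y [set u; v] z in
      supported_on a (S_pairs s t) /\ norm1 a <= 2 /\
      unique_min_cut s t (addw (perturb w [set u; v] z) a) y.
Proof.
move=> _ _; exists (Aw s t) => w y u v z [cy ymin] uv hz; cbv zeta.
have uv' : u \notin [set v] by rewrite inE.
have prodE : \prod_(x in [set u; v]) y x = y u * y v.
  by rewrite big_setU1 //= big_set1.
set c := cc0 (y u * y v) z.
pose cx x := if (x != s) && (x != t) then c else 0.
have aE : forall e', Aw s t y [set u; v] z e' =
    single [set px s t y u; u] (cx u) e' + single [set px s t y v; v] (cx v) e'.
  by move=> e'; rewrite /Aw big_setU1 //= big_set1 prodE.
split.
  move=> e' nS; rewrite aE /single.
  have H : forall x, (if e' == [set px s t y x; x] then cx x else 0) = 0.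
    move=> x; case: eqP => // He; rewrite /cx; case: ifP => // /andP[xs xt].
    exfalso; apply: nS; exists (px s t y x), x; split; last by [].
    by rewrite /px; case: ifP => _; [left|right].
  by rewrite !H addr0.
split.
  rewrite /norm1.
  apply: (le_trans (y := \sum_(e : {set 'I_n}) (`|single [set px s t y u; u] (cx u) e|
     + `|single [set px s t y v; v] (cx v) e|))).
    by apply: ler_sum => e _; rewrite aE ler_normD.
  rewrite big_split /= !sum_single.
  have Hc : forall x, `|cx x| <= 1.
    by move=> x; rewrite /cx; case: ifP => _; [apply: cc0_le1|rewrite normr0 ler01].
  by have := Hc u; have := Hc v; lra.
split=> // y' cy' ne.
have cutE : forall x, cut_obj (single [set px s t y x; x] (cx x)) y' =
    cx x * (1 - y' (px s t y x) * y' x).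
  move=> x; rewrite /cx; case: ifP => [/andP[xs xt]|_]; last by rewrite cut_single0 mul0r.
  apply: cut_single; rewrite /px; case: ifP => _; by rewrite eq_sym.
have cutE' : forall x, cut_obj (single [set px s t y x; x] (cx x)) y =
    cx x * (1 - y (px s t y x) * y x).
  move=> x; rewrite /cx; case: ifP => [/andP[xs xt]|_]; last by rewrite cut_single0 mul0r.
  apply: cut_single; rewrite /px; case: ifP => _; by rewrite eq_sym.
have objE : forall yy, cut_obj (addw (perturb w [set u; v] z) (Aw s t y [set u; v] z)) yy =
   cut_obj w yy + cut_obj (single [set u; v] z) yy
   + cut_obj (single [set px s t y u; u] (cx u)) yy
   + cut_obj (single [set px s t y v; v] (cx v)) yy.
  move=> yy; rewrite -!cut_obj_add; apply: cut_obj_ext => e.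
  rewrite /addw /perturb aE /single; case: eqP => _; rewrite ?addr0 ?addrA //.
rewrite !objE !cutE !cutE' !cut_single //.
move: cy cy' => [cy [ys yt]] [cy' [ys' yt']].
have pxE : forall yy : {ffun 'I_n -> R}, yy s = 1 -> yy t = -1 ->
    forall x, yy (px s t y x) = y x.
  move=> yy h1 h2 x; rewrite /px; case: ifP => [/eqP -> //|/negbT h].
  by rewrite h2; case: (cy x) => hx //; move: h; rewrite hx eqxx.
rewrite !pxE //.
have cxE : forall x, cx x * (1 - y x * y' x) = c * (1 - y x * y' x).
  move=> x; rewrite /cx; case: ifP => // /negbT; rewrite negb_and !negbK => /orP[] /eqP ->.
    by rewrite ys ys' mulr1 subrr !mulr0.
  by rewrite yt yt' mulrNN mulr1 subrr !mulr0.
have cxE' : forall x, cx x * (1 - y x * y x) = 0.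
  by move=> x; case: (cy x) => ->; rewrite ?mulrNN mulr1 subrr mulr0.
rewrite !cxE !cxE'.
have hlt := ymin y' (conj cy' (conj ys' yt')) ne.
have := @key R _ _ _ _ z (cy u) (cy v) (cy' u) (cy' v).
rewrite -/c => H; rewrite -!addrA in H; rewrite !addr0 -!addrA; exact: ltr_leD.
Qed.
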